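(* There exists an absolute constant $c>0$ such that for every $n$ and every convex body $K$ of volume $1$ in $\mathbb{R}^n$, $$\int_K\varphi_{\mu_K}(x)\,dx\geq e^{-cn},$$ where $\mu_K$ is the uniform (Lebesgue) probability measure on $K$.
   Context: A convex body is a compact convex set with non-empty interior. $\varphi_\mu(x)=\inf\{\mu(H): H$ a half-space of $\mathbb{R}^n$ containing $x\}$ (Tukey's half-space depth). *)

(* Defs.v *)
From HB Require Import structures.
From mathcomp Require Import all_boot all_order all_algebra.
From mathcomp Require Import all_classical all_reals all_analysis.

Set Implicit Arguments.
Unset Strict Implicit.
Unset Printing Implicit Defensive.

Import Order.TTheory GRing.Theory Num.Theory.
Import numFieldNormedType.Exports.

Local Open Scope classical_set_scope.
Local Open Scope ring_scope.

Section Defs.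
Context {R : realType}.

(** Lebesgue measure on R^n, realised on [n.-tuple R] (which carries the
    product Borel sigma-algebra generated by the coordinate projections,
    see measurable_structure.v) as the iterated product of the Lebesgue
    measure on R (Tonelli):
      leb_tuple 0 A     = Dirac mass at the unique point of R^0,
      leb_tuple (m+1) A = \int_R leb_tuple m {t | (x :: t) \in A} dx. *)
Fixpoint leb_tuple (n : nat) : set (n.-tuple R) -> \bar R :=
  match n return set (n.-tuple R) -> \bar R with
  | 0 => fun A => (\1_A [tuple] : R)%:E
  | m.+1 => fun A =>
      (\int[@lebesgue_measure R]_x leb_tuple [set t | A (cons_tuple x t)])%E
  end.

Definition row_of_tuple (n : nat) (t : n.-tuple R) : 'rV[R]_n :=
  \row_i tnth t i.

Definition vol (n : nat) (A : set 'rV[R]_n) : \bar R :=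
  leb_tuple (@row_of_tuple n @^-1` A).

Definition leb_integral (n : nat) (D : set 'rV[R]_n) (f : 'rV[R]_n -> \bar R)
  : \bar R :=
  (\int[@leb_tuple n]_(t in @row_of_tuple n @^-1` D) f (row_of_tuple t))%E.

Definition dotr (n : nat) (a x : 'rV[R]_n) : R := \sum_i a 0 i * x 0 i.

Definition convex (n : nat) (K : set 'rV[R]_n) : Prop :=
  forall x y (t : R), K x -> K y -> 0 <= t -> t <= 1 ->
    K ((1 - t) *: x + t *: y).

Definition convex_body (n : nat) (K : set 'rV[R]_n) : Prop :=
  convex K /\ compact K /\ (interior K !=set0).

Definition halfspace (n : nat) (H : set 'rV[R]_n) : Prop :=
  exists (a : 'rV[R]_n) (b : R), a != 0 /\ H = [set y | dotr a y <= b].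

(** Tukey's half-space depth of x with respect to a measure mu. *)
Definition tukey_depth (n : nat) (mu : set 'rV[R]_n -> \bar R) (x : 'rV[R]_n)
  : \bar R :=
  ereal_inf [set mu H | H in [set H | halfspace H /\ H x]].

Definition uniform_on (n : nat) (K : set 'rV[R]_n) : set 'rV[R]_n -> \bar R :=
  fun A => (vol (K `&` A) * ((fine (vol K))^-1)%:E)%E.

End Defs.

(* Main.v *)
Require Import Defs.
From HB Require Import structures.
From mathcomp Require Import all_boot all_order all_algebra.
From mathcomp Require Import all_classical all_reals all_analysis.
From mathcomp Require Import measurable_realfun.
From mathcomp Require Import lra.
Import Order.TTheory GRing.Theory Num.Theory.
Import numFieldNormedType.Exports.
Local Open Scope classical_set_scope.
Local Open Scope ring_scope.
Set Implicit Arguments.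
Unset Strict Implicit.
Unset Printing Implicit Defensive.
Section Step.
Context {R : realType} (n : nat).
Local Open Scope ereal_scope.
Definition consU (p : R * n.-tuple R) : n.+1.-tuple R := cons_tuple p.1 p.2.
Lemma measurable_consU : measurable_fun [set: R * n.-tuple R] consU.
Proof. exact: (measurable_cons measurable_fst measurable_snd). Qed.
Definition unconsU (t : n.+1.-tuple R) : R * n.-tuple R := (thead t, [tuple of behead t]).
Lemma measurable_unconsU : measurable_fun [set: n.+1.-tuple R] unconsU.
Proof.
apply: measurable_fun_pair; last exact: measurable_behead.
exact: measurable_tnth.
Qed.
Lemma consUK t : consU (unconsU t) = t.
Proof. by rewrite /consU /unconsU /=; apply/val_inj => /=; case: t => -[|x s] //=. Qed.

Variable M : {sigma_finite_measure set (n.-tuple R) -> \bar R}.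

Definition stepm := pushforward ((@lebesgue_measure R) \x M) consU.

Let stepm0 : stepm set0 = 0.
Proof. by rewrite /stepm /pushforward preimage_set0 measure0. Qed.

Let stepm_ge0 A : 0 <= stepm A.
Proof. rewrite /stepm /pushforward. exact: (measure_ge0 ((@lebesgue_measure R) \x M)). Qed.

Let stepm_sigma_additive : semi_sigma_additive stepm.
Proof.
move=> F mF tF mUF; rewrite /stepm /pushforward preimage_bigcup.
apply: measure_semi_sigma_additive.
- by move=> k; rewrite -[X in measurable X]setTI; exact: measurable_consU.
- apply/trivIsetP => /= i j _ _ ij; rewrite -preimage_setI.
  by move/trivIsetP : tF => /(_ _ _ _ _ ij) ->//; rewrite preimage_set0.
- by rewrite -preimage_bigcup -[X in measurable X]setTI; exact: measurable_consU.
Qed.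

HB.instance Definition _ := isMeasure.Build _ _ _ stepm
  stepm0 stepm_ge0 stepm_sigma_additive.

Let prod_sigma_finite : sigma_finite setT ((@lebesgue_measure R) \x M).
Proof.
have /sigma_finiteP[F [TF ndF Foo]] := sigma_finiteT (@lebesgue_measure R).
have /sigma_finiteP[G [TG ndG Goo]] := sigma_finiteT M.
exists (fun k => F k `*` G k).
 rewrite -setXTT TF TG predeqE => -[x y]; split.
    move=> [/= [i _ Fnx] [k _ Gky]]; exists (maxn i k) => //; split.
    - by move: x Fnx; exact/subsetPset/ndF/leq_maxl.
    - by move: y Gky; exact/subsetPset/ndG/leq_maxr.
  by move=> [i _ []/= ? ?]; split; exists i.
move=> k; have [? ?] := Foo k; have [? ?] := Goo k.
split; first exact: measurableX.
by rewrite product_measure1E// lte_mul_pinfty// ge0_fin_numE.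
Qed.

Let stepm_sigma_finite : sigma_finite setT stepm.
Proof.
have [F FT Ff] := prod_sigma_finite.
exists (fun k => unconsU @^-1` F k).
  by rewrite -preimage_bigcup -FT.
move=> k; have [mF fF] := Ff k; split.
  by rewrite -[X in measurable X]setTI; exact: measurable_unconsU.
rewrite /stepm /pushforward.
have -> : consU @^-1` (unconsU @^-1` F k) = F k.
  apply/seteqP; split => -[x t] /=; rewrite /consU /unconsU /=.
    by congr (F k (_, _)) => //; apply/val_inj.
  by move=> h; congr (F k (_, _)) : h; apply/val_inj.
exact: fF.
Qed.

HB.instance Definition _ := Measure_isSigmaFinite.Build _ _ _ stepm
  stepm_sigma_finite.
End Step.

Section LebM.
Context {R : realType}.
Fixpoint lebM (n : nat) : {sigma_finite_measure set (n.-tuple R) -> \bar R} :=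
  match n with
  | 0 => \d_([tuple] : 0.-tuple R)
  | m.+1 => stepm (lebM m)
  end.

Lemma lebME n A : lebM n A = leb_tuple A.
Proof.
elim: n A => [|n IH] A /=; first by [].
rewrite /stepm /pushforward /product_measure1.
apply: eq_integral => x _ /=; rewrite IH; congr leb_tuple.
apply/seteqP; split => t /=; rewrite /xsection /= inE //.
Qed.
End LebM.
Section Aff1.
Context {R : realType}.
Local Open Scope ereal_scope.
Definition af1 (c s : R) (x : R) : R := (c + s * x)%R.
Lemma measurable_af1 c s : measurable_fun [set: R] (af1 c s).
Proof. by apply: measurable_funD => //; apply: measurable_funM. Qed.

Section AffP.
Variables (c s : R).
Definition affp := pushforward (@lebesgue_measure R) (af1 c s : _ -> measurableTypeR R).
Let affp0 : affp set0 = 0.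
Proof. by rewrite /affp /pushforward preimage_set0 measure0. Qed.
Let affp_ge0 A : 0 <= affp A.
Proof. exact: (measure_ge0 (@lebesgue_measure R)). Qed.
Let affp_sigma_additive : semi_sigma_additive affp.
Proof.
move=> F mF tF mUF; rewrite /affp /pushforward preimage_bigcup.
apply: measure_semi_sigma_additive.
- by move=> k; rewrite -[X in measurable X]setTI; apply: (measurable_af1 c s) => //; exact: mF.
- apply/trivIsetP => /= i j _ _ ij; rewrite -preimage_setI.
  by move/trivIsetP : tF => /(_ _ _ _ _ ij) ->//; rewrite preimage_set0.
- by rewrite -preimage_bigcup -[X in measurable X]setTI; apply: (measurable_af1 c s).
Qed.
HB.instance Definition _ := isMeasure.Build _ _ _ affp
  affp0 affp_ge0 affp_sigma_additive.
End AffP.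

Lemma af1_pos_ocitv c s a b : (0 < s)%R ->
  af1 c s @^-1` `]a, b]%classic = `]((a - c) / s)%R, ((b - c) / s)%R]%classic.
Proof.
move=> s0; apply/seteqP; split => x /=; rewrite !in_itv /= /af1.
  by rewrite ltr_pdivrMr // ler_pdivlMr // ltrBlDl lerBrDl ![(x * s)%R]mulrC.
by rewrite ltr_pdivrMr // ler_pdivlMr // ltrBlDl lerBrDl ![(x * s)%R]mulrC.
Qed.

Lemma lebesgue_af1_pos c s A : (0 < s)%R -> measurable A ->
  (@lebesgue_measure R) A = (s%:E * affp c s A).
Proof.
move=> s0 mA.
have s0' : (0 <= s)%R by apply: ltW.
pose r : {nonneg R} := NngNum s0'.
rewrite -[s%:E]/((r%:num)%:E).
rewrite -[RHS]/(mscale r (affp c s) A).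
move: A mA; apply: (@lebesgue_measure_unique R (mscale r (affp c s))).
move=> _ [[a b]] _ <-.
change (lebesgue_measure `]a, b]%classic = (s%:E * lebesgue_measure (af1 c s @^-1` `]a, b]%classic))).
rewrite af1_pos_ocitv //.
rewrite !lebesgue_measure_itv /= !lte_fin ltr_pM2r ?invr_gt0 // ltrD2r.
case: ifPn => ab; last by rewrite mule0.
rewrite -EFinD -EFinM; congr (_%:E).
by rewrite -mulrBl mulrCA divff ?mulr1 ?gt_eqF // opprB addrA subrK.
Qed.

Lemma affp_pos c s A : (0 < s)%R -> measurable A ->
  affp c s A = ((`|s|^-1)%R%:E * (@lebesgue_measure R) A).
Proof.
move=> s0 mA; rewrite (lebesgue_af1_pos c s0 mA) muleA -EFinM gtr0_norm //.
by rewrite mulVf ?gt_eqF // mul1e.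
Qed.

Lemma affp_eq c s A : (s != 0)%R -> measurable A ->
  affp c s A = ((`|s|^-1)%R%:E * (@lebesgue_measure R) A).
Proof.
move=> s0 mA; have [sp|sn] := ltP 0%R s; first exact: affp_pos.
have sn' : (s < 0)%R by rewrite lt_neqAle s0.
have -> : affp c s A = affp c (- s) A.
  rewrite /affp /pushforward.
  have -> : af1 c s @^-1` A = (-%R : _ -> measurableTypeR R) @^-1` (af1 c (- s) @^-1` A).
    by apply/seteqP; split => x; rewrite /af1 /= mulrNN.
  apply: lebesgue_measureN.
  rewrite -[X in measurable X]setTI; apply: (measurable_af1 c (- s)) => //.
by rewrite affp_pos ?oppr_gt0 // normrN.
Qed.

Lemma integral_af1 c s (h : measurableTypeR R -> \bar R) : (s != 0)%R ->
  measurable_fun setT h -> (forall x, 0 <= h x) ->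
  \int[@lebesgue_measure R]_x h (af1 c s x) =
  ((`|s|^-1)%R%:E * \int[@lebesgue_measure R]_x h x).
Proof.
move=> s0 mh h0.
have ns : (0 <= `|s|^-1)%R by rewrite invr_ge0.
pose r : {nonneg R} := NngNum ns.
transitivity (\int[pushforward (@lebesgue_measure R) (af1 c s : _ -> measurableTypeR R)]_(y in setT) h y).
  by rewrite ge0_integral_pushforward //; exact: measurable_af1.
transitivity (\int[mscale r (@lebesgue_measure R)]_(y in setT) h y).
  apply: eq_measure_integral; first exact: measurable_af1.
  move=> mf A mA _.
  change (affp c s A = (`|s|^-1)%:E * lebesgue_measure A); exact: affp_eq.
by rewrite ge0_integral_mscale.
Qed.
End Aff1.
Section AffN.
Context {R : realType}.
Local Open Scope ereal_scope.

Definition aff n (c : n.-tuple R) (s : R) (t : n.-tuple R) : n.-tuple R :=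
  [tuple (tnth c i + s * tnth t i)%R | i < n].

Lemma tnth_aff n (c : n.-tuple R) s t i : tnth (aff c s t) i = (tnth c i + s * tnth t i)%R.
Proof. by rewrite tnth_mktuple. Qed.

Lemma measurable_aff n (c : n.-tuple R) s : measurable_fun setT (aff c s).
Proof.
apply/measurable_fun_tnthP => i.
rewrite (_ : _ \o _ = fun t => tnth c i + s * tnth t i)%R; last first.
  by apply/funext => t /=; rewrite tnth_aff.
apply: measurable_funD => //; apply: measurable_funM => //.
exact: measurable_tnth.
Qed.

Lemma aff_cons n c0 (c : n.-tuple R) s x t :
  aff (cons_tuple c0 c) s (cons_tuple x t) = cons_tuple (af1 c0 s x) (aff c s t).
Proof.
apply: eq_from_tnth => i; rewrite tnth_aff.
case: (unliftP ord0 i) => [j ->|->].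
  by rewrite !tnthS tnth_aff.
by rewrite !tnth0.
Qed.

Lemma lebMS n A : @lebM R n.+1 A =
  \int[@lebesgue_measure R]_x lebM n (xsection ((@consU R n) @^-1` A) x).
Proof. by []. Qed.

Lemma lebM_aff n (c : n.-tuple R) s A : (s != 0)%R -> measurable A ->
  lebM n (aff c s @^-1` A) = ((`|s|^-1) ^+ n)%:E * lebM n A.
Proof.
move=> s0; elim: n c A => [|n IH] c A mA.
  rewrite expr0 mul1e /= /dirac; congr ((_ : R)%:E).
  have e : forall u v : 0.-tuple R, u = v by move=> u v; rewrite (tuple0 u) (tuple0 v).
  rewrite /preimage /=; have -> : [set t | A (aff c s t)] = A.
    by apply/seteqP; split => t /=; rewrite (e (aff c s t) t).
  by [].
rewrite (lebMS (aff c s @^-1` A)) (lebMS A).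
have -> : c = cons_tuple (thead c) [tuple of behead c].
  by apply/val_inj; case: c => -[|? ?].
set c0 := thead c; set c' := [tuple of behead c].
have mA' : measurable ((@consU R n) @^-1` A).
  by rewrite -[X in measurable X]setTI; apply: measurable_consU.
transitivity (\int[@lebesgue_measure R]_x
   (((`|s|^-1) ^+ n)%:E * lebM n (xsection ((@consU R n) @^-1` A) (af1 c0 s x)))).
  apply: eq_integral => x _; rewrite -(IH c'); last exact: measurable_xsection.
  congr (lebM n _); apply/seteqP; split => t; rewrite /xsection /= !inE /=;
    by rewrite /consU /= aff_cons.
rewrite ge0_integralZl_EFin //; last first.
  apply: (measurableT_comp (f := fun y => lebM n (xsection ((@consU R n) @^-1` A) y))).
    exact: measurable_fun_xsection.
  exact: measurable_af1.
rewrite (@integral_af1 R c0 s (fun y => lebM n (xsection ((@consU R n) @^-1` A) y))) //; last first.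
  exact: (measurable_fun_xsection (lebM n) mA').
by rewrite muleA -EFinM exprSr.
Qed.
End AffN.
Section Meas.
Context {R : realType}.
Local Open Scope ring_scope.

Lemma measurable_lt d (T : measurableType d) (f : T -> R) e :
  measurable_fun setT f -> measurable [set t | f t < e].
Proof.
move=> mf; rewrite -[X in measurable X]setTI.
have -> : [set t | f t < e] = f @^-1` `]-oo, e[.
  by apply/seteqP; split => t /=; rewrite in_itv.
exact: mf.
Qed.

Lemma measurable_le d (T : measurableType d) (f : T -> R) e :
  measurable_fun setT f -> measurable [set t | f t <= e].
Proof.
move=> mf; rewrite -[X in measurable X]setTI.
have -> : [set t | f t <= e] = f @^-1` `]-oo, e].
  by apply/seteqP; split => t /=; rewrite in_itv.
exact: mf.
Qed.

Lemma measurable_forall n (P : 'I_n -> set (n.-tuple R)) :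
  (forall i, measurable (P i)) -> measurable [set t | forall i, P i t].
Proof.
move=> mP.
have -> : [set t | forall i, P i t] = \big[setI/setT]_(i <- index_enum 'I_n) P i.
  rewrite -bigcap_seq; apply/seteqP; split => t /=.
  - by move=> h i _; exact: h.
  - by move=> h i; apply: h; rewrite /= mem_index_enum.
by apply: bigsetI_measurable => i _; exact: mP.
Qed.

Definition box n (q : n.-tuple rat) (k : nat) : set (n.-tuple R) :=
  [set t | forall i, `|tnth t i - ratr (tnth q i)| < k.+1%:R^-1].

Lemma measurable_box n q k : measurable (@box n q k).
Proof.
apply: measurable_forall => i; apply: measurable_lt.
apply: measurableT_comp => //; apply: measurable_funB => //.
exact: measurable_tnth.
Qed.

Lemma measurable_closed n (K : set 'rV[R]_n) : closed K ->
  measurable (@row_of_tuple R n @^-1` K).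
Proof.
move=> cK.
pose F (m : nat) : set (n.-tuple R) :=
  match @unpickle (n.-tuple rat * nat)%type m with
  | Some qk => if `[< box qk.1 qk.2 `<=` ~` (@row_of_tuple R n @^-1` K) >]
               then box qk.1 qk.2 else set0
  | None => set0
  end.
have mF m : measurable (F m).
  rewrite /F; case: unpickle => [qk|//]; case: ifP => // _; exact: measurable_box.
suff -> : @row_of_tuple R n @^-1` K = ~` \bigcup_m F m.
  by apply: measurableC; exact: bigcupT_measurable.
apply/seteqP; split => t.
  move=> Kt [m _]; rewrite /F; case: unpickle => [qk|//]; case: ifPn => // /asboolP.
  by move=> sub /sub; apply.
move=> /= nF; case: (pselect (K (row_of_tuple t))) => // nKt; exfalso; apply: nF.
have := closed_openC cK; rewrite openE => /(_ _ nKt).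
move=> /nbhs_ballP [e e0 be].
pose k := Num.trunc (2 / e).
have hk : k.+1%:R^-1 < e / 2.
  rewrite -[e / 2]invf_div ltf_pV2 ?posrE ?divr_gt0 //.
  exact: truncnS_gt.
have qi : forall i : 'I_n, exists q : rat,
    ratr q \in `](tnth t i - k.+1%:R^-1), (tnth t i + k.+1%:R^-1)[.
  move=> i; apply: rat_in_itvoo.
  by rewrite ltrBlDr -addrA ltrDl -mulr2n mulrn_wgt0 // invr_gt0.
pose q : n.-tuple rat := [tuple xchoose (qi i) | i < n].
have tq : box q k t.
  move=> i; rewrite tnth_mktuple; have := xchooseP (qi i).
  by rewrite in_itv /= -ltr_distlC distrC.
have sub : box q k `<=` ~` (@row_of_tuple R n @^-1` K).
  move=> u bu /= Ku; apply: (be (row_of_tuple u)) Ku.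
  split => // i j; rewrite /ball /= !mxE.
  rewrite (le_lt_trans (ler_distD (ratr (tnth q j)) _ _)) //.
  apply: (lt_le_trans (ltrD (tq j) _)); first by rewrite distrC; exact: bu.
  by rewrite [leRHS]splitr; apply: ltW; exact: (ltrD hk hk).
exists (pickle (q, k)); first by [].
rewrite /F pickleK /=.
by case: ifPn => [_|/asboolPn]; [exact: tq|].
Qed.
End Meas.
Section Depth.
Context {R : realType} (n : nat).
Local Open Scope ring_scope.

Definition rowt (t : n.-tuple R) : 'rV[R]_n := row_of_tuple t.
Definition refl (x y : n.-tuple R) : n.-tuple R := [tuple 2 * tnth x i - tnth y i | i < n].
Definition dbl (x : n.-tuple R) : n.-tuple R := [tuple 2 * tnth x i | i < n].
Definition negt (y : n.-tuple R) : n.-tuple R := [tuple - tnth y i | i < n].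

Lemma refl_aff x y : refl x y = aff (dbl x) (-1) y.
Proof.
by apply: eq_from_tnth => i; rewrite tnth_aff !tnth_mktuple mulN1r.
Qed.

Lemma refl_affy x y : refl x y = aff (negt y) 2 x.
Proof.
by apply: eq_from_tnth => i; rewrite tnth_aff !tnth_mktuple addrC.
Qed.

Lemma reflK x y : refl x (refl x y) = y.
Proof.
by apply: eq_from_tnth => i; rewrite !tnth_mktuple opprB addrC subrK.
Qed.

Definition lin (a : 'rV[R]_n) (u : n.-tuple R) : R := \sum_i a 0 i * tnth u i.

Lemma linE a u : dotr a (rowt u) = lin a u.
Proof. by apply: eq_bigr => i _; rewrite /rowt /row_of_tuple mxE. Qed.

Lemma lin_refl a x y : lin a (refl x y) = 2 * lin a x - lin a y.
Proof.
rewrite /lin mulr_sumr -sumrB; apply: eq_bigr => i _.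
by rewrite tnth_mktuple mulrBr mulrCA.
Qed.

Lemma measurable_lin a : measurable_fun setT (lin a).
Proof.
apply: measurable_sum => i; apply: measurable_funM => //.
exact: measurable_tnth.
Qed.

Lemma rowt_mid x y : rowt x = (1 - 2^-1) *: rowt y + 2^-1 *: rowt (refl x y).
Proof.
apply/rowP => i; rewrite !mxE tnth_mktuple.
have h2 : (2 : R) != 0 by rewrite pnatr_eq0.
rewrite mulrBr mulrA mulVf // mul1r; lra.
Qed.

Variable (K : set 'rV[R]_n).
Let Kt := rowt @^-1` K.
Definition Cset (t : n.-tuple R) := [set u | Kt u /\ Kt (refl t u)].

Lemma measurable_Cset t : measurable Kt -> measurable (Cset t).
Proof.
move=> mK; have -> : Cset t = Kt `&` (aff (dbl t) (-1) @^-1` Kt).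
  by apply/seteqP; split => u /=; rewrite /Cset /= refl_aff.
apply: measurableI => //; rewrite -[X in measurable X]setTI.
exact: measurable_aff.
Qed.

Local Open Scope ereal_scope.
Lemma half_bound (t : n.-tuple R) (a : 'rV[R]_n) (b : R) : measurable Kt ->
  (dotr a (rowt t) <= b)%R ->
  lebM n (Cset t) <= lebM n (Kt `&` [set u | (dotr a (rowt u) <= b)%R]) +
                     lebM n (Kt `&` [set u | (dotr a (rowt u) <= b)%R]).
Proof.
move=> mK hb.
set H0 := [set u | (lin a u <= lin a t)%R].
set H1 := [set u | (- lin a u <= - lin a t)%R].
have mH0 : measurable H0 by apply: measurable_le; exact: measurable_lin.
have mH1 : measurable H1.
  by apply: measurable_le; apply: measurableT_comp => //; exact: measurable_lin.
have mC := measurable_Cset t mK.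
have e1 : lebM n (Cset t `&` H1) = lebM n (Cset t `&` H0).
  have -> : Cset t `&` H1 = aff (dbl t) (-1) @^-1` (Cset t `&` H0).
    apply/seteqP; split => u /=; rewrite -refl_aff /H0 /H1 /Cset /= reflK lin_refl.
      by move=> [[Ku Kr] h]; split => //; rewrite lerBlDr -lerBlDl; lra.
    by move=> [[Kr Ku] h]; split => //; move: h; lra.
  rewrite lebM_aff ?oppr_eq0 ?oner_eq0 //; last exact: measurableI.
  by rewrite normrN normr1 invr1 expr1n mul1e.
have e2 : lebM n (Cset t `&` H0) <=
          lebM n (Kt `&` [set u | (dotr a (rowt u) <= b)%R]).
  apply: le_measure; rewrite ?inE //.
  - exact: measurableI.
  - by apply: measurableI => //; apply: measurable_le; rewrite (_ : (fun _ => _) = lin a); [exact: measurable_lin|apply/funext => u; rewrite linE].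
  - move=> u [[Ku _] h]; split => //=; rewrite linE; apply: le_trans h _.
    by rewrite -linE.
apply: le_trans (leeD e2 e2); rewrite -[X in _ <= X + _]e1.
apply: le_trans (measureU2 _ _ _); [|exact: measurableI|exact: measurableI].
apply: le_measure; rewrite ?inE //; first by apply: measurableU; exact: measurableI.
move=> u Cu; have [h|h] := leP (lin a u) (lin a t).
  by right.
by left; split => //; rewrite /H1 /= lerN2 ltW.
Qed.
End Depth.
Section Fub.
Context {R : realType} (n : nat).
Local Open Scope ereal_scope.

Lemma fubini_eq (A : set (n.-tuple R * n.-tuple R)) : measurable A ->
  \int[lebM n]_x lebM n (xsection A x) = \int[lebM n]_y lebM n (ysection A y).
Proof.
move=> mA; have := indic_fubini_tonelli (lebM n) (lebM n) mA.
by rewrite indic_fubini_tonelli_FE // indic_fubini_tonelli_GE.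
Qed.

Definition reflU (p : n.-tuple R * n.-tuple R) := refl p.1 p.2.

Lemma measurable_reflU : measurable_fun setT reflU.
Proof.
apply/measurable_fun_tnthP => i.
rewrite (_ : _ \o _ = fun p => 2 * tnth p.1 i - tnth p.2 i)%R; last first.
  by apply/funext => p /=; rewrite /reflU /refl tnth_mktuple.
apply: measurable_funB.
  apply: measurable_funM => //.
  exact: (measurableT_comp (measurable_tnth i) measurable_fst).
exact: (measurableT_comp (measurable_tnth i) measurable_snd).
Qed.

Variable (K : set 'rV[R]_n).
Let Kt := @rowt R n @^-1` K.
Definition Eset := (Kt `*` Kt) `&` (reflU @^-1` Kt).

Lemma measurable_Eset : measurable Kt -> measurable Eset.
Proof.
move=> mK; apply: measurableI; first exact: measurableX.
rewrite -[X in measurable X]setTI; exact: measurable_reflU.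
Qed.

Lemma xsection_Eset x : xsection Eset x = if `[< Kt x >] then Cset K x else set0.
Proof.
apply/seteqP; split => y; rewrite /xsection /= inE /Eset /Cset /=.
  by move=> [[Kx Ky] Kr]; rewrite asboolT.
case: ifPn => [/asboolP Kx [Ky Kr]|_ //]; by [].
Qed.

Lemma ysection_Eset y : convex K ->
  ysection Eset y = if `[< Kt y >] then aff (negt y) 2 @^-1` Kt else set0.
Proof.
move=> cK; apply/seteqP; split => x; rewrite /ysection /= inE /Eset /=.
  by move=> [[Kx Ky] Kr]; rewrite asboolT // /= -refl_affy.
case: ifPn => [/asboolP Ky|_ //] /=; rewrite -refl_affy => Kr.
split => //; split => //; rewrite /Kt /preimage /= (rowt_mid x y).
apply: cK => //; rewrite ?invr_ge0 ?invf_le1 //; lra.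
Qed.

Lemma int_Eset : convex K -> measurable Kt ->
  \int[lebM n]_x lebM n (xsection Eset x) = (((2^-1) ^+ n)%:E * lebM n Kt * lebM n Kt).
Proof.
move=> cK mK; rewrite fubini_eq; last exact: measurable_Eset.
transitivity (\int[lebM n]_(y in Kt) (cst (((2^-1) ^+ n)%:E * lebM n Kt)) y); last first.
  by rewrite integral_cst.
rewrite [RHS]integral_mkcond; apply: eq_integral => y _.
rewrite ysection_Eset // patchE /=.
case: (pselect (Kt y)) => Ky.
  rewrite asboolT // mem_set // lebM_aff ?pnatr_eq0 //; congr (_%:E * _).
  by rewrite ger0_norm.
by rewrite asboolF // memNset // measure0.
Qed.
End Fub.
Section Final.
Context {R : realType}.
Local Open Scope ereal_scope.

Lemma le_integral_nm d (T : measurableType d) (mu : {measure set T -> \bar R})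
  (D : set T) (f g : T -> \bar R) :
  (forall x, D x -> 0 <= f x) -> (forall x, D x -> f x <= g x) ->
  \int[mu]_(x in D) f x <= \int[mu]_(x in D) g x.
Proof.
move=> f0 fg.
rewrite ge0_integralE // [leRHS]ge0_integralE; last first.
  by move=> x Dx; apply: le_trans (fg x Dx); exact: f0.
apply: ereal_sup_le => _ [h hf <-]; exists h => // x.
apply: le_trans (hf x) _; rewrite /patch; case: ifPn => // /set_mem Dx.
exact: fg.
Qed.

Lemma half_le (c x : \bar R) : 0 <= x -> c <= x + x -> c * (2^-1)%:E <= x.
Proof.
case: x => [r| |] //; last by move=> _ _; exact: leey.
case: c => [s| |] //.
- rewrite lee_fin => r0; rewrite -EFinD -EFinM !lee_fin => h; lra.
- by move=> _ _; rewrite mulNyr gtr0_sg ?invr_gt0 // mul1e leNye.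
Qed.

Lemma exp_bound (n : nat) : (0 < n)%N ->
  (expR (- (2 * n%:R)) <= (2^-1) ^+ n * 2^-1 :> R)%R.
Proof.
move=> n0.
have e1 : (2 <= expR (1 : R))%R by have := expR_ge1Dx (1 : R); rewrite (_ : 1 + 1 = 2)%R.
have e2 : (4 <= expR (2 : R))%R.
  rewrite -[2%R]mulr1 -[2%R]/(2%:R) expRM_natl expr2.
  by apply: (le_trans _ (ler_pM _ _ e1 e1)) => //; lra.
rewrite mulrC -mulrN expRM_natl expRN.
have h : ((expR 2)^-1 <= 2^-1 * 2^-1 :> R)%R.
  by rewrite -invfM lef_pV2 ?posrE ?expR_gt0 //; lra.
apply: (le_trans (lerXn2r _ _ _ h)); rewrite ?nnegrE ?invr_ge0 ?expR_ge0 //.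
rewrite exprMn ler_pM2l ?exprn_gt0 ?invr_gt0 //.
case: n n0 => // n _; rewrite exprS -[leRHS]mulr1 ler_pM2l ?invr_gt0 //.
by rewrite exprn_ile1 // ?invr_ge0 ?invf_le1 //; lra.
Qed.
End Final.

Unset Implicit Arguments.
Set Strict Implicit.

Theorem proposition4p1 (R : realType) :
  exists c : R, 0 < c /\
    forall (n : nat) (K : set 'rV[R]_n), (0 < n)%N ->
      convex_body K -> vol K = 1%E ->
      (leb_integral K (tukey_depth (uniform_on K))
         >= (expR (- (c * n%:R)))%:E)%E.
Proof.
exists 2; split => // n K n0 [cK [compK _]] vK.
have clK : closed K by apply: compact_closed => //; exact: norm_hausdorff.
have mK := measurable_closed clK.
set Kt := @row_of_tuple R n @^-1` K.
have lK : lebM n Kt = 1%E by rewrite lebME.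
have eL : (@leb_tuple R n) = (lebM n : set _ -> \bar R).
  by apply/funext => A; rewrite lebME.
rewrite /leb_integral eL.
pose g t := (lebM n (xsection (Eset K) t) * (2^-1)%:E)%E.
apply: (@le_trans _ _ (\int[lebM n]_(t in Kt) g t)%E); last first.
  apply: le_integral_nm => t Kt_t.
    by apply: mule_ge0 => //; rewrite lee_fin invr_ge0.
  apply: le_ereal_inf_tmp => _ [H [[a [b [a0 ->]]] Ht] <-].
  rewrite /uniform_on vK /= invr1 mule1 /vol.
  rewrite -lebME; apply: half_le; first exact: measure_ge0.
  have -> : xsection (Eset K) t = Cset K t.
    by rewrite xsection_Eset asboolT.
  have -> : (@row_of_tuple R n @^-1` (K `&` [set y | (dotr a y <= b)%R])) =
     (Kt `&` [set u | (dotr a (rowt u) <= b)%R]) by [].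
  exact: (half_bound mK Ht).
have hE : measurable (Eset K) by exact: measurable_Eset.
have mh : measurable_fun setT (fun t => lebM n (xsection (Eset K) t)).
  exact: (measurable_fun_xsection (lebM n) hE).
rewrite /g ge0_integralZr //; last exact: measurable_funS mh.
have -> : (\int[lebM n]_(t in Kt) lebM n (xsection (Eset K) t) =
           \int[lebM n]_t lebM n (xsection (Eset K) t))%E.
  rewrite integral_mkcond; apply: eq_integral => t _; rewrite patchE.
  case: ifPn => // /negP Kt_t.
  rewrite xsection_Eset asboolF ?measure0 //.
  by move=> h; apply: Kt_t; rewrite inE.
rewrite int_Eset // lK !mule1 -EFinM lee_fin.
exact: exp_bound.
Qed.
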